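(* Let $n\ge 1$ and $s\in\{1,\dots,n\}$ be integers and let $C\in\mathbb{R}^{n\times n}$ be symmetric positive definite. Define $z^*=\max\{\log\det(C_{S,S}) : S\subseteq\{1,\dots,n\},\ |S|=s\}$. Then for every $t$ with $0\le t\le\lambda_{\min}(C)$, $$z^*=\max\Big\{\Phi_s\big(M_t(x);t\big) : x\in\{0,1\}^n,\ \textstyle\sum_{i=1}^n x_i=s\Big\}.$$
   Context: $\log$ is the natural logarithm, $C_{S,S}$ is the principal submatrix of $C$ with rows and columns indexed by $S$, and $\lambda_{\min}(C)$ is the smallest eigenvalue of $C$. For $0\le t\le\lambda_{\min}(C)$ the matrix $C-tI$ is positive semidefinite; let $A(t)\in\mathbb{R}^{n\times n}$ be a Cholesky factor of it, i.e. $C-tI=A(t)^\top A(t)$, and let $a_i(t)\in\mathbb{R}^n$ be the $i$-th column of $A(t)$. For $x\in[0,1]^n$ put $M_t(x)=\sum_{i=1}^n x_i\,a_i(t)a_i(t)^\top$. For a symmetric matrix $X$, $\lambda_1(X)\ge\dots\ge\lambda_n(X)$ are its eigenvalues. For a positive semidefinite $X$ and $t\ge 0$, $\Phi_s(X;t)=\sum_{i=1}^s\log(\lambda_i(X)+t)$. *)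

(* Defs.v *)
From HB Require Import structures.
From mathcomp Require Import all_boot all_order all_algebra.
From mathcomp Require Import all_classical all_reals all_analysis.
Set Implicit Arguments. Unset Strict Implicit. Unset Printing Implicit Defensive.
Import Order.TTheory GRing.Theory Num.Theory.
Local Open Scope ring_scope.

Section Defs.
Variable R : realType.

Definition sym_pd n (C : 'M[R]_n) : Prop :=
  C^T = C /\ forall v : 'cV[R]_n, v != 0 -> 0 < (v^T *m C *m v) 0 0.

Definition sorted_eigs_of n (A : 'M[R]_n) (l : seq R) : bool :=
  sorted (fun x y => y <= x) l &&
  (char_poly A == \prod_(x <- l) ('X - x%:P)).

(* eigs A = [:: lambda_1(A); ...; lambda_n(A)], lambda_1 >= ... >= lambda_n
   (well defined for real symmetric matrices; [::] if char_poly does not split) *)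
Definition eigs n (A : 'M[R]_n) : seq R :=
  match pselect (exists l, sorted_eigs_of A l) with
  | left e => xchoose e
  | right _ => [::]
  end.

(* lambda_i(A), 1-based index i *)
Definition lambda n (A : 'M[R]_n) (i : nat) : R := nth 0 (eigs A) i.-1.

Definition lambda_min n (A : 'M[R]_n) : R := last 0 (eigs A).

(* principal submatrix C_{S,S} (indices of S in increasing order) *)
Definition princ_sub n (C : 'M[R]_n) (S : {set 'I_n}) : 'M[R]_#|S| :=
  \matrix_(i < #|S|, j < #|S|) C (enum_val i) (enum_val j).

Definition Mt n (A : 'M[R]_n) (x : 'I_n -> R) : 'M[R]_n :=
  \sum_(i < n) x i *: (col i A *m (col i A)^T).

Definition Phi n (s : nat) (X : 'M[R]_n) (t : R) : R :=
  \sum_(1 <= i < s.+1) ln (lambda X i + t).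

End Defs.

(* Main.v *)
Require Import Defs.
From HB Require Import structures.
From mathcomp Require Import all_boot all_order all_algebra.
From mathcomp Require Import all_classical all_reals all_analysis.
From mathcomp Require Import complex zify ring.
Import Order.TTheory GRing.Theory Num.Theory.
Local Open Scope ring_scope.


Section Split.
Variable R : rcfType.

Lemma char_poly_conj k (U D : 'M[R[i]]_k) : U \in unitmx ->
  char_poly (invmx U *m D *m U) = char_poly D.
Proof.
move=> Uu.
rewrite /char_poly /char_poly_mx.
have -> : 'X%:M - map_mx polyC (invmx U *m D *m U) =
  map_mx polyC (invmx U) *m ('X%:M - map_mx polyC D) *m map_mx polyC U.
  rewrite !map_mxM mulmxBr mulmxBl; congr (_ - _).
  by rewrite mul_mx_scalar -scalemxAl -map_mxM mulVmx // map_mx1 scalemx1.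
rewrite !det_mulmx mulrC mulrA -!det_mulmx -map_mxM mulmxV //.
by rewrite map_scalar_mx rmorph1 mul1mx.
Qed.

Lemma sym_split k (Q : 'M[R]_k) : Q^T = Q ->
  exists d : seq R, char_poly Q = \prod_(x <- d) ('X - x%:P).
Proof.
move=> Qs.
pose Qc := map_mx (real_complex R) Q.
have Qh : Qc \is hermsymmx.
  rewrite qualifE /=; apply/eqP/matrixP => i j; rewrite !mxE /= expr0 mul1r.
  by rewrite -[Q i j](congr1 (fun M : 'M[R]_k => M i j) Qs) mxE; apply/eqP; rewrite eq_complex /= oppr0 !eqxx.
have := hermitian_spectral_diag_real Qh.
have := hermitian_normalmx Qh => /orthomx_spectralP.
set P := spectralmx Qc; set sp := spectral_diag Qc => QcE spR.
have cpQc : char_poly Qc = \prod_(i < k) ('X - (sp 0 i)%:P).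
  rewrite QcE char_poly_conj ?spectral_unit // char_poly_trig ?diag_mx_is_trig //.
  by apply: eq_bigr => i _; rewrite mxE eqxx mulr1n.
exists [seq complex.Re (sp 0 i) | i <- enum 'I_k].
apply: (@map_poly_inj _ _ (real_complex R)).
rewrite map_char_poly -/Qc cpQc map_prod_XsubC big_map big_enum /=.
apply: eq_bigr => i _; congr ('X - _%:P).
by rewrite RRe_real //; apply: (mxOverP spR).
Qed.
End Split.


Lemma cp_sylv (F : fieldType) n k (B : 'M[F]_(n,k)) (C : 'M[F]_(k,n)) : (k <= n)%N ->
  char_poly (B *m C) = 'X^(n-k) * char_poly (C *m B).
Proof.
move=> kn.
pose Bp := map_mx polyC B; pose Cp := map_mx polyC C.
pose L := block_mx ('X%:M : 'M[{poly F}]_n) Bp Cp (1%:M : 'M[{poly F}]_k).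
have cpBC : char_poly (B *m C) = \det ('X%:M - Bp *m Cp).
  by rewrite /char_poly /char_poly_mx map_mxM.
have cpCB : char_poly (C *m B) = \det ('X%:M - Cp *m Bp).
  by rewrite /char_poly /char_poly_mx map_mxM.
have dL : \det L = char_poly (B *m C).
  have -> : L = block_mx 1%:M Bp 0 1%:M *m block_mx ('X%:M - Bp *m Cp) 0 Cp 1%:M.
    rewrite mulmx_block; congr block_mx.
    - by rewrite mul1mx subrK.
    - by rewrite mulmx0 mulmx1 add0r.
    - by rewrite mul0mx mul1mx add0r.
    - by rewrite mul0mx mulmx1 add0r.
  by rewrite det_mulmx det_ublock det_lblock !det1 !mulr1 mul1r cpBC.
have d2 : \det (block_mx ('X%:M : 'M[{poly F}]_n) 0 (- Cp) ('X%:M : 'M[{poly F}]_k) *m L) =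
          ('X * 'X)^+n * char_poly (C *m B).
  have -> : block_mx ('X%:M : 'M[{poly F}]_n) 0 (- Cp) ('X%:M : 'M[{poly F}]_k) *m L =
     block_mx (('X * 'X)%:M) ('X *: Bp) 0 ('X%:M - Cp *m Bp).
    rewrite mulmx_block; congr block_mx.
    - by rewrite mul0mx addr0 scalar_mxM.
    - by rewrite mul0mx addr0 mul_scalar_mx.
    - by rewrite mulNmx mul_mx_scalar mul_scalar_mx addNr.
    - by rewrite mulNmx mulmx1 addrC.
  by rewrite det_ublock det_scalar cpCB.
move: d2; rewrite det_mulmx det_lblock !det_scalar dL -exprD.
rewrite -expr2 -exprM => H.
have e : (2 * n = (n + k) + (n - k))%N by lia.
apply: (@mulfI _ ('X^(n + k))); first by rewrite expf_neq0 // polyX_eq0.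
by rewrite H e exprD mulrA.
Qed.


Section Aux.
Variable R : realType.

Lemma sorted_ge_nseq (s : seq R) m : sorted (fun x y => y <= x) s ->
  all (fun x => 0 <= x) s -> sorted (fun x y => y <= x) (s ++ nseq m 0).
Proof.
have tr : transitive (fun x y : R => y <= x).
  by move=> a b c /= h1 h2; apply: le_trans h2 h1.
rewrite !(sorted_pairwise tr) pairwise_cat => -> /allP s0 /=.
apply/andP; split.
  by apply/allrelP => x y /s0 x0 /nseqP [-> _].
elim: m => //= m ->; rewrite andbT; apply/allP => y /nseqP [-> _]; exact: lexx.
Qed.

Lemma sum_sq_ge0 m (u : 'rV[R]_m) : 0 <= (u *m u^T) 0 0.
Proof.
by rewrite mxE; apply: sumr_ge0 => i _; rewrite mxE -expr2 sqr_ge0.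
Qed.

Lemma sum_sq_gt0 m (u : 'rV[R]_m) : u != 0 -> 0 < (u *m u^T) 0 0.
Proof.
move=> u0; rewrite lt_def sum_sq_ge0 andbT; apply: contra u0 => /eqP H.
have Hge : forall j : 'I_m, predT j -> 0 <= u 0 j * u^T j 0.
  by move=> a _; rewrite mxE -expr2 sqr_ge0.
move: H; rewrite mxE => H.
have H2 := psumr_eq0P Hge H.
apply/eqP/matrixP => i j; rewrite ord1 mxE.
by move: (H2 j isT); rewrite mxE => /eqP; rewrite mulf_eq0 orbb => /eqP.
Qed.

Lemma prod_neg (d : seq R) (t : R) :
  \prod_(x <- d) (- t - x) = (-1) ^+ size d * \prod_(x <- d) (x + t).
Proof.
elim: d => [|x d IH]; first by rewrite !big_nil expr0 mulr1.
by rewrite !big_cons IH exprS /=; ring.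
Qed.

Lemma ln_prod (d : seq R) (t : R) : (forall x, x \in d -> 0 < x + t) ->
  ln (\prod_(x <- d) (x + t)) = \sum_(x <- d) ln (x + t).
Proof.
elim: d => [|x d IH] H; first by rewrite !big_nil ln1.
rewrite !big_cons lnM ?IH //.
- by move=> y yd; apply: H; rewrite in_cons yd orbT.
- by rewrite posrE; apply: H; rewrite mem_head.
rewrite posrE big_seq; apply: prodr_gt0 => y yd.
by apply: H; rewrite in_cons yd orbT.
Qed.

End Aux.


Section Key.
Variable R : realType.

Lemma eigsE n (M : 'M[R]_n) l : sorted_eigs_of M l -> eigs M = l.
Proof.
move=> H; rewrite /eigs; case: pselect => [e|ne]; last first.
  by exfalso; apply: ne; exists l.
have := xchooseP e; move: (xchoose e) => l' /andP [s1 /eqP c1].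
move: H => /andP [s2 /eqP c2].
have tr : transitive (fun x y : R => y <= x).
  by move=> a b c /= h1 h2; apply: le_trans h2 h1.
apply: (sorted_eq tr) => //.
  by move=> a b /andP [h1 h2]; apply/eqP; rewrite eq_le h1 h2.
by apply: prod_XsubC_eq; rewrite -c1 -c2.
Qed.

Variables (n : nat) (S : {set 'I_n}).
Local Notation k := #|S|.
Definition Psel : 'M[R]_(k, n) := \matrix_(j, i) ((enum_val j == i)%:R).

Lemma PselM m (M : 'M[R]_(n, m)) j b : (Psel *m M) j b = M (enum_val j) b.
Proof.
rewrite mxE (bigD1 (enum_val j)) //= big1 ?addr0.
  by rewrite mxE eqxx mul1r.
by move=> i /negPf ni; rewrite mxE eq_sym ni mul0r.
Qed.

Lemma MPselT m (M : 'M[R]_(m, n)) a j : (M *m Psel^T) a j = M a (enum_val j).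
Proof.
rewrite mxE (bigD1 (enum_val j)) //= big1 ?addr0.
  by rewrite !mxE eqxx mulr1.
by move=> i /negPf ni; rewrite !mxE eq_sym ni mulr0.
Qed.

Lemma PPT : Psel *m Psel^T = 1%:M.
Proof.
apply/matrixP => j l; rewrite PselM !mxE.
by rewrite (inj_eq enum_val_inj) eq_sym.
Qed.

Lemma princE (C : 'M[R]_n) : princ_sub C S = Psel *m C *m Psel^T.
Proof. by apply/matrixP => j l; rewrite MPselT PselM !mxE. Qed.

Lemma MtE (A : 'M[R]_n) :
  Mt A (fun i => (i \in S)%:R) = (A *m Psel^T) *m (A *m Psel^T)^T.
Proof.
apply/matrixP => a b; rewrite /Mt summxE mxE.
transitivity (\sum_(j < k) A a (enum_val j) * A b (enum_val j)); last first.
  by apply: eq_bigr => j _; rewrite [(_^T) j b]mxE !MPselT.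
rewrite -(big_enum_val (A:=mem S) (fun i => A a i * A b i)) /=.
rewrite [RHS]big_mkcond /=; apply: eq_bigr => i _.
rewrite !mxE big_ord1 !mxE.
by case: (i \in S); rewrite ?mul1r ?mul0r.
Qed.


Lemma horner_cp m (Q : 'M[R]_m) a : (char_poly Q).[a] = \det (a%:M - Q).
Proof.
rewrite /char_poly -horner_evalE -det_map_mx; congr (\det _).
apply/matrixP => i j; rewrite !mxE /= horner_evalE.
by rewrite hornerD hornerN hornerC hornerMn hornerX.
Qed.

Lemma prod_nseq0 m : \prod_(x <- nseq m (0:R)) ('X - x%:P) = 'X^m.
Proof.
elim: m => [|m IH]; first by rewrite big_nil expr0.
by rewrite /= big_cons IH subr0 exprS.
Qed.

Lemma key (C A : 'M[R]_n) (t : R) : sym_pd C -> A^T *m A = C - t%:M ->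
  ln (\det (princ_sub C S)) = Phi k (Mt A (fun i => (i \in S)%:R)) t.
Proof.
move=> [Csym Cpd] AC.
set B := A *m Psel^T.
set Q := B^T *m B.
have QE : Q = princ_sub C S - t%:M.
  rewrite /Q /B trmx_mul trmxK princE mulmxA -[Psel *m A^T *m A]mulmxA AC.
  by rewrite mulmxBr mulmxBl mul_mx_scalar -scalemxAl PPT scalemx1.
have Qs : Q^T = Q by rewrite /Q trmx_mul trmxK.
have [d cpQ] := @sym_split _ _ Q Qs.
have sd : size d = k.
  by have := size_char_poly Q; rewrite cpQ size_prod_XsubC => -[].
have kn : (k <= n)%N by have := max_card (mem S); rewrite card_ord.
have eigv : forall x, x \in d -> exists2 v : 'rV[R]_k, v *m Q = x *: v & v != 0.
  move=> x xd; apply/eigenvalueP; rewrite eigenvalue_root_char cpQ.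
  by rewrite root_prod_XsubC.
have dge0 : forall x, x \in d -> 0 <= x.
  move=> x /eigv [v vQ v0].
  have e : v *m Q *m v^T = (v *m B^T) *m (v *m B^T)^T.
    by rewrite /Q [(v *m B^T)^T]trmx_mul trmxK !mulmxA.
  have := @sum_sq_ge0 R _ (v *m B^T).
  rewrite -e vQ -scalemxAl mxE.
  by rewrite pmulr_lge0 // sum_sq_gt0.
have dgt0 : forall x, x \in d -> 0 < x + t.
  move=> x /eigv [v vQ v0].
  have vC : v *m princ_sub C S = (x + t) *: v.
    by rewrite -[princ_sub C S](subrK (t%:M)) -QE mulmxDr vQ mul_mx_scalar scalerDl.
  have w0 : (v *m Psel)^T != 0.
    rewrite trmx_eq0; apply: contra v0 => /eqP w0.
    by rewrite -[v]mulmx1 -PPT mulmxA w0 mul0mx.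
  have e : ((v *m Psel)^T)^T *m C *m (v *m Psel)^T = v *m princ_sub C S *m v^T.
    by rewrite trmxK [(v *m Psel)^T]trmx_mul princE !mulmxA.
  move: (Cpd _ w0); rewrite e vC -scalemxAl mxE.
  by rewrite pmulr_lgt0 // sum_sq_gt0.
set l0 := sort (fun x y : R => y <= x) d ++ nseq (n - k) 0.
have tot : total (fun x y : R => y <= x) by move=> a b; apply: le_total.
have ps : perm_eq (sort (fun x y : R => y <= x) d) d by rewrite perm_sort.
have eigsM : eigs (B *m B^T) = l0.
  apply: eigsE; apply/andP; split.
    apply: sorted_ge_nseq; first exact: sort_sorted.
    by apply/allP => x; rewrite mem_sort; apply: dge0.
  apply/eqP; rewrite cp_sylv // -/Q cpQ big_cat /= prod_nseq0 mulrC.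
  by rewrite (perm_big _ ps).
rewrite MtE /Phi /lambda eigsM.
rewrite big_add1 /=.
transitivity (\sum_(x <- d) ln (x + t)); last first.
  rewrite -(perm_big _ ps) /=.
  rewrite (big_nth 0) size_sort sd; apply: eq_big_nat => i /andP [_ ik].
  by rewrite /l0 nth_cat size_sort sd ik.
rewrite -ln_prod //.
congr ln.
have := horner_cp _ Q (- t).
rewrite cpQ horner_prod.
under eq_bigr => x _ do rewrite hornerXsubC.
rewrite prod_neg QE opprB.
have -> : (- t)%:M + (t%:M - princ_sub C S) = - princ_sub C S.
  by rewrite raddfN /= addrA addNr add0r.
rewrite -[- princ_sub C S]scaleN1r detZ sd => H.
by apply: esym; apply: (mulfI _ H); rewrite signr_eq0.
Qed.

End Key.


Theorem proposition1 (R : realType) (n s : nat) (C : 'M[R]_n) :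
  (1 <= n)%N -> (1 <= s <= n)%N -> sym_pd C ->
  forall (t : R) (A : 'M[R]_n),
    0 <= t -> t <= lambda_min C -> A^T *m A = C - t%:M ->
    \big[Order.max/-oo%E]_(S : {set 'I_n} | #|S| == s) (ln (\det (princ_sub C S)))%:E
    = \big[Order.max/-oo%E]_(x : {ffun 'I_n -> bool} | #|[set i | x i]| == s)
        (Phi s (Mt A (fun i => (x i)%:R)) t)%:E.
Proof.
move=> _ _ Cpd t A _ _ AC.
rewrite [RHS](reindex (fun S : {set 'I_n} => [ffun i => i \in S])) /=; last first.
  exists (fun x : {ffun 'I_n -> bool} => [set i | x i]) => y _.
    by apply/setP => i; rewrite inE ffunE.
  by apply/ffunP => i; rewrite ffunE inE.
apply: eq_big => S.
  have -> // : [set i | [ffun i => i \in S] i] = S.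
  by apply/setP => i; rewrite inE ffunE.
move/eqP => <-.
have -> : (fun i => ([ffun i => i \in S] i)%:R) = (fun i => (i \in S)%:R :> R).
  by apply: boolp.funext => i; rewrite ffunE.
by rewrite (@key R n S C A t Cpd AC).
Qed.
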